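(* For every integer $n\ge 4$, $px_{n-1,2}(K_n)=2$.
   Context: All graphs are finite, simple and undirected. An edge-coloring of a graph may assign the same color to adjacent edges. A tree $T$ in an edge-colored graph is a proper tree if no two adjacent edges of $T$ receive the same color. For $S\subseteq V(G)$ with $|S|\ge 2$, an $S$-tree is a tree in $G$ containing all vertices of $S$. $S$-trees $T_1,\dots,T_\ell$ are internally disjoint if $E(T_i)\cap E(T_j)=\emptyset$ and $V(T_i)\cap V(T_j)=S$ for all $i\ne j$. For a connected graph $G$ of order $n$ and integers $k,\ell$ with $2\le k\le n$ and $1\le \ell\le \kappa_k(G)$ (where $\kappa_k(G)$ is the minimum, over all $k$-subsets $S$ of $V(G)$, of the maximum number of internally disjoint $S$-trees), the $(k,\ell)$-proper index $px_{k,\ell}(G)$ is the minimum number of colors in an edge-coloring of $G$ such that for every $k$-subset $S$ of $V(G)$ there exist $\ell$ internally disjoint proper $S$-trees. *)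

(* Defs.v *)
From mathcomp Require Import all_boot.
Set Implicit Arguments. Unset Strict Implicit. Unset Printing Implicit Defensive.

(* A finite simple graph on vertex type T is given by a symmetric irreflexive
   adjacency relation adj.  Edges are 2-element vertex sets {x,y} with adj x y. *)
Definition is_edge (T : finType) (adj : rel T) (E : {set T}) : bool :=
  [exists x, exists y, adj x y && (E == [set x; y])].

Definition Kadj (n : nat) : rel 'I_n := fun x y => x != y.

Definition subgraph (T : finType) := ({set T} * {set {set T}})%type.

Definition F_connect (T : finType) (F : {set {set T}}) (x y : T) : bool :=
  connect (fun a b => [set a; b] \in F) x y.

(* H = (V,F) is a tree of G: nonempty, every edge of F is an edge of G with
   both ends in V, H is connected, and H is acyclic (every edge of F is a
   bridge: deleting it disconnects its two endpoints). *)
Definition is_tree (T : finType) (adj : rel T) (H : subgraph T) : Prop :=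
  let: (V, F) := H in
  [/\ V != set0,
      (forall E, E \in F -> is_edge adj E && (E \subset V)),
      (forall x y, x \in V -> y \in V -> F_connect F x y) &
      (forall x y, [set x; y] \in F -> x != y -> ~~ F_connect (F :\ [set x; y]) x y)].

(* An edge-colouring with m colours (adjacent edges may share colours). *)
Definition coloring (T : finType) (m : nat) := {set T} -> 'I_m.

Definition is_proper_tree (T : finType) (adj : rel T) (m : nat) (c : coloring T m)
    (H : subgraph T) : Prop :=
  is_tree adj H /\
  (forall E1 E2, E1 \in H.2 -> E2 \in H.2 -> E1 != E2 -> E1 :&: E2 != set0 ->
     c E1 != c E2).

Definition is_S_tree (T : finType) (adj : rel T) (S : {set T}) (H : subgraph T) : Prop :=
  is_tree adj H /\ S \subset H.1.

Definition int_disjoint (T : finType) (S : {set T}) (l : nat) (Ts : 'I_l -> subgraph T) : Prop :=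
  forall i j, i != j -> (Ts i).2 :&: (Ts j).2 = set0 /\ (Ts i).1 :&: (Ts j).1 = S.

Definition kl_proper (T : finType) (adj : rel T) (k l m : nat) (c : coloring T m) : Prop :=
  forall S : {set T}, #|S| = k ->
    exists Ts : 'I_l -> subgraph T,
      (forall i, is_S_tree adj S (Ts i) /\ is_proper_tree adj c (Ts i)) /\
      int_disjoint S Ts.

Definition px_is (T : finType) (adj : rel T) (k l p : nat) : Prop :=
  (exists c : coloring T p, kl_proper adj k l c) /\
  (forall m (c : coloring T m), kl_proper adj k l c -> p <= m).

(* Main.v *)
Require Import Defs.
From mathcomp Require Import all_boot zify.
Set Implicit Arguments. Unset Strict Implicit. Unset Printing Implicit Defensive.

Section Gen.
Variable T : finType.
Implicit Types (x y z : T) (s : seq T).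

Fixpoint pedges x s : {set {set T}} :=
  if s is y :: s' then [set x; y] |: pedges y s' else set0.

Lemma closedP (e : rel T) (A : pred T) :
  (forall u w, e u w -> u \in A -> w \in A) ->
  forall x y, connect e x y -> x \in A -> y \in A.
Proof.
move=> cl x y /connectP [p]; elim: p x => [|z p IH] x /=; first by move=> _ ->.
by case/andP=> exz pz ey xA; apply: (IH z pz ey); apply: cl xA.
Qed.

Lemma symc (F : {set {set T}}) x y :
  connect (fun a b => [set a; b] \in F) x y -> connect (fun a b => [set a; b] \in F) y x.
Proof.
move=> h. have sym : symmetric (fun a b => [set a; b] \in F) by move=> a b; rewrite setUC.
by rewrite (sym_connect_sym sym).
Qed.

Lemma pedges_split x s E : E \in pedges x s ->
  exists s1 y s2, s = s1 ++ y :: s2 /\ E = [set last x s1; y].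
Proof.
elim: s x => [|y s IH] x //=; first by rewrite inE.
case/setU1P => [->|]; first by exists [::], y, s.
case/IH=> s1 [z [s2 [-> ->]]]; by exists (y :: s1), z, s2.
Qed.

Lemma pedges_edge x s E : uniq (x :: s) -> E \in pedges x s ->
  exists a b, [/\ E = [set a; b], a \in x :: s, b \in x :: s & a != b].
Proof.
move=> u /pedges_split [s1 [y [s2 [es ->]]]]; exists (last x s1), y.
have ml : last x s1 \in x :: s1 by rewrite mem_last.
have u2 : uniq ((x :: s1) ++ y :: s2) by move: u; rewrite es.
move: u2; rewrite cat_uniq => /and3P [_ nh _].
rewrite es; split => //.
- have h : last x s1 \in (x :: s1) ++ y :: s2 by rewrite mem_cat ml.
  exact: h.
- have h : y \in (x :: s1) ++ y :: s2 by rewrite mem_cat mem_head orbT.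
  exact: h.
apply/eqP => e; move/negP: nh; apply; apply/hasP; exists y; first exact: mem_head.
by rewrite /= -e.
Qed.

Lemma pedges_sub x s E : uniq (x :: s) -> E \in pedges x s -> E \subset [set z in x :: s].
Proof.
move=> u /(pedges_edge u) [a [b [-> ha hb _]]].
by apply/subsetP => z /set2P [] ->; rewrite inE.
Qed.

Lemma pedges_sub' x s E z : E \in pedges x s -> z \in E -> z \in x :: s.
Proof.
case/pedges_split => s1 [y [s2 [-> ->]]] /set2P [] ->.
  have h : last x s1 \in (x :: s1) ++ y :: s2 by rewrite mem_cat mem_last.
  exact: h.
have h : y \in (x :: s1) ++ y :: s2 by rewrite mem_cat mem_head orbT.
exact: h.
Qed.

Lemma pedges_cat x s1 s2 : pedges x (s1 ++ s2) = pedges x s1 :|: pedges (last x s1) s2.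
Proof.
elim: s1 x => [|y s1 IH] x /=; first by rewrite set0U.
by rewrite IH setUA.
Qed.

Lemma pedges_conn x s u w : u \in x :: s -> w \in x :: s ->
  connect (fun a b => [set a; b] \in pedges x s) u w.
Proof.
elim: s x u w => [|y s IH] x u w.
  by rewrite !inE => /eqP -> /eqP ->; apply: connect0.
set e := (fun a b => _).
have toy : forall u, u \in x :: y :: s -> connect e u y.
  move=> z; rewrite inE => /orP [/eqP ->|hz].
    by apply: connect1; rewrite /e /= setU11.
  apply: connect_sub (IH y z y hz (mem_head _ _)) => a b hab.
  by apply: connect1; rewrite /e /= setU1r.
move=> hu hw; apply: connect_trans (toy u hu) _; apply: symc; exact: toy.
Qed.

Lemma ptree x s : uniq (x :: s) -> is_tree (fun a b : T => a != b) ([set z in x :: s], pedges x s).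
Proof.
move=> u; split.
- by apply/set0Pn; exists x; rewrite inE mem_head.
- move=> E hE; rewrite (pedges_sub u hE) andbT.
  case: (pedges_edge u hE) => a [b [-> _ _ ab]].
  by apply/existsP; exists a; apply/existsP; exists b; rewrite ab eqxx.
- by move=> a b; rewrite !inE; apply: pedges_conn.
move=> a b hab ab; apply/negP => hc.
case: (pedges_split hab) => s1 [y [s2 [es eE]]].
have ml : last x s1 \in x :: s1 by rewrite mem_last.
move: (u); rewrite es -cat_cons cat_uniq => /and3P [_ dis _].
have ny : y \notin x :: s1 by apply/negP => h; move: dis; apply/negP/negPn/hasP; exists y; rewrite ?inE ?eqxx.
set A := [pred z | z \in x :: s1].
have cl : forall p q, [set p; q] \in pedges x s :\ [set a; b] -> p \in A -> q \in A.
  move=> p q; rewrite inE => /andP [ne]; rewrite es pedges_cat /= => hpq hp.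
  case/setUP: hpq => [h|].
    by move: (pedges_sub' h (set22 p q)).
  case/setU1P => [h|h]; first by move: ne; rewrite h eE set11.
  have : p \in y :: s2 by apply: (pedges_sub' h (set21 p q)).
  move=> hp2; move: dis; case/hasP; by exists p.
have : (a \in [set last x s1; y]) && (b \in [set last x s1; y]) by rewrite -eE set21 set22.
case/andP => /set2P [] ea /set2P [] eb; subst.
- by move: ab; rewrite eqxx.
- by move: (closedP cl hc ml); rewrite /A /= (negbTE ny).
- by move: (closedP cl (symc hc) ml); rewrite /A /= (negbTE ny).
- by move: ab; rewrite eqxx.
Qed.

Variable m : nat.
Variable c : {set T} -> 'I_m.

Fixpoint alt x s : bool :=
  if s is y :: s' then
    (if s' is z :: _ then c [set x; y] != c [set y; z] else true) && alt y s'
  else true.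

Lemma head_edge y s E : uniq (y :: s) -> E \in pedges y s -> y \in E ->
  exists z s', s = z :: s' /\ E = [set y; z].
Proof.
case: s => [|z s] //=; first by rewrite inE.
move=> u; case/setU1P => [->|h] hy; first by exists z, s.
by move: (pedges_sub' h hy) u => h1 /=; rewrite h1.
Qed.

Lemma pproper x s : uniq (x :: s) -> alt x s ->
  forall E1 E2, E1 \in pedges x s -> E2 \in pedges x s -> E1 != E2 -> E1 :&: E2 != set0 ->
  c E1 != c E2.
Proof.
elim: s x => [|y s IH] x //=; first by move=> _ _ E1 E2; rewrite inE.
move=> u /andP [h1 h2].
have u' : uniq (y :: s) by case/andP: u.
have xn : x \notin y :: s by case/andP: u.
have key : forall E, E \in pedges y s -> [set x; y] :&: E != set0 -> c [set x; y] != c E.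
  move=> E hE /set0Pn [w]; rewrite inE => /andP [/set2P [] -> hw].
    by move: (pedges_sub' hE hw); rewrite (negbTE xn).
  case: (head_edge u' hE hw) => z [s' [es ->]]; move: h1; by rewrite es.
move=> E1 E2 /setU1P [->|e1] /setU1P [->|e2] ne ni.
- by rewrite eqxx in ne.
- exact: key.
- by rewrite eq_sym; apply: key => //; rewrite setIC.
- exact: (IH y u' h2).
Qed.

End Gen.
Section Gen2.
Variable T : finType.
Variable m : nat.
Variable c : {set T} -> 'I_m.

Lemma pedges_map (f : nat -> T) k len E : E \in pedges (f k) (map f (iota k.+1 len)) ->
  exists2 t, k <= t < k + len & E = [set f t; f t.+1].
Proof.
elim: len k => [|len IH] k /=; first by rewrite inE.
case/setU1P => [->|]; first by exists k => //; rewrite leqnn addnS ltnS leq_addr.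
case/IH => t /andP [h1 h2] ->; exists t => //; rewrite addnS -addSn h2 andbT.
exact: ltnW.
Qed.

Lemma alt_map (f : nat -> T) k len :
  (forall t, k <= t -> t.+2 <= k + len -> c [set f t; f t.+1] != c [set f t.+1; f t.+2]) ->
  alt c (f k) (map f (iota k.+1 len)).
Proof.
elim: len k => [|len IH] k //= h.
apply/andP; split.
  case: len IH h => [|len] IH h //=; apply: h => //; rewrite !addnS !ltnS leq_addr //.
apply: IH => t h1 h2; apply: h; first exact: ltnW.
by rewrite addnS -addSn.
Qed.

Definition sg (f : nat -> T) k len : subgraph T :=
  ([set z in map f (iota k len.+1)], pedges (f k) (map f (iota k.+1 len))).

Lemma sg_ok (f : nat -> T) k len :
  {in [pred t | k <= t <= k + len] &, injective f} ->
  (forall t, k <= t -> t.+2 <= k + len -> c [set f t; f t.+1] != c [set f t.+1; f t.+2]) ->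
  is_tree (fun a b : T => a != b) (sg f k len) /\ is_proper_tree (fun a b : T => a != b) c (sg f k len).
Proof.
move=> inj halt.
have u : uniq (f k :: map f (iota k.+1 len)).
  have -> : f k :: map f (iota k.+1 len) = map f (iota k len.+1) by [].
  rewrite map_inj_in_uniq ?iota_uniq // => t t'; rewrite !mem_iota => h h'.
  apply: inj; rewrite inE; lia.
have tr := ptree u.
split => //; split => //.
exact: (pproper u (alt_map halt)).
Qed.

Lemma sg_mem (f : nat -> T) k len z : (z \in (sg f k len).1) = (z \in map f (iota k len.+1)).
Proof. by rewrite inE. Qed.

End Gen2.
Section Zig.
Variable N : nat.
Hypothesis N4 : 4 <= N.
Hypothesis Nev : ~~ odd N.

Definition wrap x := if x < N then x else x - N.
Definition zig a t := if odd t then wrap (a + t.+1 %/ 2) else wrap (a + N - t %/ 2).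

Lemma zig_lt a t : a < N -> t < N -> zig a t < N.
Proof. rewrite /zig /wrap => ha ht; case: ifP => o; case: ifP => h; lia. Qed.

Lemma zig0 a : a < N -> zig a 0 = a.
Proof. rewrite /zig /wrap /= => ha; case: ifP => h; lia. Qed.

Lemma zig_inj a t t' : a < N -> t < N -> t' < N -> zig a t = zig a t' -> t = t'.
Proof.
rewrite /zig /wrap => ha ht ht'.
case: (boolP (odd t)) => o; case: (boolP (odd t')) => o';
case: ifP => h; case: ifP => h'; lia.
Qed.

Lemma zig_par a t : a < N -> t.+1 < N -> odd (zig a t + zig a t.+1) = ~~ odd t.
Proof.
rewrite /zig /wrap /= => ha ht.
case: (boolP (odd t)) => o /=; case: ifP => h; case: ifP => h'; lia.
Qed.

Definition cls a t := zig a t + zig a t.+1.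

Lemma cls_spec a t : a < N -> t.+1 < N ->
  let b := ~~ odd t in
  [\/ cls a t + N = 2 * a + b, cls a t = 2 * a + b | cls a t = 2 * a + b + N].
Proof.
rewrite /cls /zig /wrap /= => ha ht.
case: (boolP (odd t)) => o /=; case: ifP => h; case: ifP => h'; 
 first [by constructor 1; lia | by constructor 2; lia | by constructor 3; lia].
Qed.

Lemma cls_dis a t t' : a < N -> t.+1 < N -> t'.+1 < N -> cls a t != cls (wrap a.+1) t'.
Proof.
move=> ha ht ht'.
have ha' : wrap a.+1 < N by rewrite /wrap; case: ifP; lia.
case: (cls_spec ha ht) => /= e; case: (cls_spec ha' ht') => /= e';
move: e e'; rewrite /wrap; case: ifP => h;
case: (boolP (odd t)) => o; case: (boolP (odd t')) => o' /=; lia.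
Qed.

Lemma zig_mem a x : a < N -> (x \in map (zig a) (iota 0 N)) = (x < N).
Proof.
move=> ha.
have u : uniq (map (zig a) (iota 0 N)).
  rewrite map_inj_in_uniq ?iota_uniq // => t t'; rewrite !mem_iota /= !add0n.
  exact: zig_inj.
have sub : {subset map (zig a) (iota 0 N) <= iota 0 N}.
  by move=> y /mapP [t]; rewrite !mem_iota /= !add0n => ht ->; apply: zig_lt.
have [|_ e] := uniq_min_size u sub; first by rewrite size_map.
by rewrite e mem_iota.
Qed.

Lemma zig_mem1 a x : a < N -> (x \in map (zig a) (iota 1 N.-1)) = (x < N) && (x != a).
Proof.
move=> ha.
have e : iota 0 N = 0 :: iota 1 N.-1 by case: N N4 => // n _.
have u : uniq (map (zig a) (iota 0 N)).
  rewrite map_inj_in_uniq ?iota_uniq // => t t'; rewrite !mem_iota /= !add0n.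
  exact: zig_inj.
have z0 := zig0 ha.
have := zig_mem x ha; move: u; rewrite e /= z0 inE => /andP [na _].
case: (eqVneq x a) => [->|_] /=; first by rewrite (negbTE na) ha.
by rewrite andbT.
Qed.

End Zig.
Lemma build (n : nat) (c : coloring 'I_n 2) (S : {set 'I_n}) (T1 T2 : subgraph 'I_n) :
  is_tree (fun a b : 'I_n => a != b) T1 /\ is_proper_tree (fun a b : 'I_n => a != b) c T1 ->
  is_tree (fun a b : 'I_n => a != b) T2 /\ is_proper_tree (fun a b : 'I_n => a != b) c T2 ->
  T1.2 :&: T2.2 = set0 -> T1.1 :&: T2.1 = S ->
  exists Ts : 'I_2 -> subgraph 'I_n,
      (forall i, is_S_tree (@Kadj n) S (Ts i) /\ is_proper_tree (@Kadj n) c (Ts i)) /\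
      int_disjoint S Ts.
Proof.
move=> [t1 p1] [t2 p2] de dv.
exists (fun i : 'I_2 => if nat_of_ord i == 0 then T1 else T2); split.
  move=> i; case: ifP => _; split => //; split => //; rewrite -dv.
    exact: subsetIl.
  exact: subsetIr.
move=> [[|[|i]] hi] [[|[|j]] hj] //= _; rewrite ?(setIC T2.2) ?(setIC T2.1) //.
Qed.

Lemma disjP (T : finType) (A B : {set T}) : (forall x, x \in A -> x \in B -> False) -> A :&: B = set0.
Proof.
move=> h; apply/setP => x; rewrite !inE; apply/negP => /andP [a b]; exact: h a b.
Qed.
Section Main.
Variable m : nat.
Hypothesis m3 : 3 <= m.

Definition NN := if odd m then m.+1 else m.
Lemma NN4 : 4 <= NN.
Proof. rewrite /NN; case: ifP => h; lia. Qed.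
Lemma NNev : ~~ odd NN.
Proof. by rewrite /NN; case: ifP => h //=; rewrite h. Qed.
Lemma NNle : NN <= m.+1.
Proof. by rewrite /NN; case: ifP. Qed.

Definition vf a t : 'I_m.+1 := inord (zig NN a t).
Definition col (E : {set 'I_m.+1}) : 'I_2 :=
  inord (~~ (~~ odd m && (ord_max \in E)) && odd (\sum_(x in E) nat_of_ord x)).

Lemma sum2 (x y : 'I_m.+1) : x != y -> \sum_(z in [set x; y]) (nat_of_ord z) = x + y.
Proof. by move=> ne; rewrite big_setU1 ?big_set1 // inE. Qed.

Lemma vf_val a t : a < NN -> t < NN -> nat_of_ord (vf a t) = zig NN a t.
Proof.
move=> ha ht; rewrite /vf inordK //.
exact: leq_trans (zig_lt NN4 NNev ha ht) NNle.
Qed.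

Lemma vf_lt a t : a < NN -> t < NN -> nat_of_ord (vf a t) < NN.
Proof. by move=> ha ht; rewrite vf_val //; exact: (zig_lt NN4 NNev ha ht). Qed.

Lemma vf_inj a t t' : a < NN -> t < NN -> t' < NN -> vf a t = vf a t' -> t = t'.
Proof.
move=> ha ht ht' e; apply: (zig_inj NN4 NNev ha ht ht').
by rewrite -!vf_val // e.
Qed.

Lemma vf_neq a t : a < NN -> t.+1 < NN -> vf a t != vf a t.+1.
Proof.
move=> ha ht; apply/eqP => /(vf_inj ha (ltnW ht) ht) /eqP; by rewrite eqn_leq ltnn andbF.
Qed.

Lemma vf_nmax a t : ~~ odd m -> a < NN -> t < NN -> vf a t != ord_max.
Proof.
move=> om ha ht; apply/eqP => e; have := vf_lt ha ht; rewrite e /= /NN (negbTE om).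
by rewrite ltnn.
Qed.

Lemma ineq2 (b1 b2 : bool) : ((inord b1 : 'I_2) != inord b2) = (b1 != b2).
Proof.
congr negb; apply/eqP/eqP => [/(congr1 val)|->//].
by rewrite /= !inordK ?ltnS ?leq_b1 //; case: b1; case: b2.
Qed.

Lemma col_zig a t : a < NN -> t.+1 < NN -> col [set vf a t; vf a t.+1] = inord (~~ odd t).
Proof.
move=> ha ht; rewrite /col sum2 ?vf_neq // !vf_val // ?(ltnW ht) // zig_par ?NN4 ?NNev //.
case: (boolP (odd m)) => om //=.
by rewrite !inE !(eq_sym ord_max) (negbTE (vf_nmax om ha (ltnW ht))) (negbTE (vf_nmax om ha ht)).
Qed.

Lemma alt_zig a t : a < NN -> t.+2 < NN ->
  col [set vf a t; vf a t.+1] != col [set vf a t.+1; vf a t.+2].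
Proof.
move=> ha ht; rewrite !col_zig ?ineq2 //; last exact: ltnW.
by rewrite /= negbK; case: (odd t).
Qed.

Lemma col_spec (x : 'I_m.+1) : ~~ odd m -> col [set x; ord_max] = inord false.
Proof. by move=> om; rewrite /col om set22. Qed.

Lemma zz_dis a t t' : a < NN -> t.+1 < NN -> t'.+1 < NN ->
  [set vf a t; vf a t.+1] != [set vf (wrap NN a.+1) t'; vf (wrap NN a.+1) t'.+1].
Proof.
move=> ha ht ht'.
have ha' : wrap NN a.+1 < NN by rewrite /wrap; case: ifP; have := NN4; lia.
apply/eqP => e; have := congr1 (fun E : {set 'I_m.+1} => \sum_(z in E) nat_of_ord z) e.
rewrite /= !sum2 ?vf_neq // !vf_val // ?(ltnW ht) ?(ltnW ht') //.
by apply/eqP; apply: (cls_dis NN4 NNev ha ht ht').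
Qed.

Lemma mem_inord (L : seq nat) (z : 'I_m.+1) : all (fun x => x < m.+1) L ->
  (z \in map inord L) = (nat_of_ord z \in L).
Proof.
move=> /allP h; apply/mapP/idP => [[y yL ->]|zL]; first by rewrite inordK // h.
by exists (nat_of_ord z); rewrite ?inord_val.
Qed.

Lemma mem_vf a k l (z : 'I_m.+1) : a < NN -> k + l <= NN ->
  (z \in map (vf a) (iota k l)) = (nat_of_ord z \in map (zig NN a) (iota k l)).
Proof.
move=> ha hkl; rewrite (map_comp inord) mem_inord //; apply/allP => y /mapP [t].
rewrite mem_iota => /andP [_ h] ->; apply: leq_trans (zig_lt NN4 NNev ha _) NNle.
exact: leq_trans h hkl.
Qed.

Lemma vf_injin a k len : a < NN -> k + len < NN ->
  {in [pred t | k <= t <= k + len] &, injective (vf a)}.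
Proof. move=> ha h t t'; rewrite !inE => h1 h2; apply: vf_inj => //; lia. Qed.

Lemma caseA (v : 'I_m.+1) : odd m ->
  exists T1 T2 : subgraph 'I_m.+1,
   [/\ is_tree (fun a b : 'I_m.+1 => a != b) T1 /\ is_proper_tree (fun a b : 'I_m.+1 => a != b) col T1,
       is_tree (fun a b : 'I_m.+1 => a != b) T2 /\ is_proper_tree (fun a b : 'I_m.+1 => a != b) col T2,
       T1.2 :&: T2.2 = set0 & T1.1 :&: T2.1 = [set~ v]].
Proof.
move=> om.
have eN : NN = m.+1 by rewrite /NN om.
have N4 := NN4.
set vv := nat_of_ord v.
have hv : vv < NN by rewrite eN; exact: ltn_ord.
set a' := wrap NN vv.+1.
have ha' : a' < NN by rewrite /a' /wrap; case: ifP; lia.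
exists (sg (vf vv) 1 (NN - 2)), (sg (vf a') 0 (NN - 1)); split.
- apply: sg_ok; first by apply: vf_injin; lia.
  move=> t h1 h2; apply: alt_zig; lia.
- apply: sg_ok; first by apply: vf_injin; lia.
  move=> t h1 h2; apply: alt_zig; lia.
- apply: disjP => E /pedges_map [t /andP [t1 t2] ->] /pedges_map [t' /andP [_ t2'] e].
  have ht : t.+1 < NN by lia.
  have ht' : t'.+1 < NN by lia.
  by move: (zz_dis hv ht ht'); rewrite e eqxx.
apply/setP => z; rewrite in_setI !sg_mem in_setC1.
have ez : (NN - 2).+1 = NN.-1 by lia.
have ez' : (NN - 1).+1 = NN by lia.
rewrite ez ez' !mem_vf //; try lia.
rewrite (zig_mem1 NN4 NNev _ hv) (zig_mem NN4 NNev _ ha').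
have hz : nat_of_ord z < NN by rewrite eN.
rewrite hz andbT /=; congr negb; apply/eqP/eqP => [h|->//]; exact: val_inj h.
Qed.
Lemma caseB : ~~ odd m ->
  exists T1 T2 : subgraph 'I_m.+1,
   [/\ is_tree (fun a b : 'I_m.+1 => a != b) T1 /\ is_proper_tree (fun a b : 'I_m.+1 => a != b) col T1,
       is_tree (fun a b : 'I_m.+1 => a != b) T2 /\ is_proper_tree (fun a b : 'I_m.+1 => a != b) col T2,
       T1.2 :&: T2.2 = set0 & T1.1 :&: T2.1 = [set~ ord_max]].
Proof.
move=> om.
have eN : NN = m by rewrite /NN (negbTE om).
have N4 := NN4.
have h0 : 0 < NN by lia.
set a' := wrap NN 0.+1.
have ha' : a' < NN by rewrite /a' /wrap; case: ifP; lia.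
exists (sg (vf 0) 0 (NN - 1)), (sg (vf a') 0 (NN - 1)); split.
- apply: sg_ok; first by apply: vf_injin; lia.
  move=> t h1 h2; apply: alt_zig; lia.
- apply: sg_ok; first by apply: vf_injin; lia.
  move=> t h1 h2; apply: alt_zig; lia.
- apply: disjP => E /pedges_map [t /andP [t1 t2] ->] /pedges_map [t' /andP [_ t2'] e].
  have ht : t.+1 < NN by lia.
  have ht' : t'.+1 < NN by lia.
  by move: (zz_dis h0 ht ht'); rewrite e eqxx.
apply/setP => z; rewrite in_setI !sg_mem in_setC1.
have ez' : (NN - 1).+1 = NN by lia.
rewrite ez' !mem_vf //; try lia.
rewrite (zig_mem NN4 NNev _ h0) (zig_mem NN4 NNev _ ha') andbb.
rewrite eN; apply/idP/idP => [h|].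
  by apply/eqP => e; move: h; rewrite e /= ltnn.
by move=> h; have := ltn_ord z; rewrite ltnS leq_eqVlt => /orP [/eqP e|//]; case/eqP: h; apply: val_inj.
Qed.
Lemma ltm_nmax (z : 'I_m.+1) : (z != ord_max) = (nat_of_ord z < m).
Proof.
apply/idP/idP => [h|h]; last by apply/eqP => e; move: h; rewrite e /= ltnn.
have := ltn_ord z; rewrite ltnS leq_eqVlt => /orP [/eqP e|//].
by case/eqP: h; apply: val_inj.
Qed.

Lemma caseC (v : 'I_m.+1) : ~~ odd m -> v != ord_max ->
  exists T1 T2 : subgraph 'I_m.+1,
   [/\ is_tree (fun a b : 'I_m.+1 => a != b) T1 /\ is_proper_tree (fun a b : 'I_m.+1 => a != b) col T1,
       is_tree (fun a b : 'I_m.+1 => a != b) T2 /\ is_proper_tree (fun a b : 'I_m.+1 => a != b) col T2,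
       T1.2 :&: T2.2 = set0 & T1.1 :&: T2.1 = [set~ v]].
Proof.
move=> om vm.
have eN : NN = m by rewrite /NN (negbTE om).
have N4 := NN4.
have Ne := NNev.
set vv := nat_of_ord v.
have hv : vv < NN by rewrite eN -ltm_nmax.
set a' := wrap NN vv.+1.
have ha' : a' < NN by rewrite /a' /wrap; case: ifP; lia.
pose g1 t := if t < NN then vf vv t else ord_max.
pose h t := if t is t'.+1 then vf a' t' else ord_max.
have nm := vf_nmax om.
have spn : vf vv (NN - 1) != vf a' 0.
  apply/eqP => /(congr1 (@nat_of_ord _)); rewrite !vf_val //; try lia.
  rewrite (zig0 NN4 NNev ha') /zig /a' /wrap.
  have -> : odd (NN - 1) by lia.
  case: ifP => h1; case: ifP => h2; lia.
exists (sg g1 1 (NN - 1)), (sg h 0 NN); split.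
- apply: sg_ok.
    move=> t t'; rewrite !inE /g1 => h1 h2.
    case: ifP => l1; case: ifP => l2.
    + by apply: vf_inj.
    + by move=> e; move: (nm _ _ hv l1); rewrite e eqxx.
    + by move=> e; move: (nm _ _ hv l2); rewrite e eqxx.
    + move=> _; lia.
  move=> t h1 h2; rewrite /g1.
  have l0 : t < NN by lia.
  have l1 : t.+1 < NN by lia.
  rewrite l0 l1; case: ifP => l2; first exact: alt_zig.
  rewrite col_zig // col_spec // ineq2 /=; lia.
- apply: sg_ok.
    move=> [|t] [|t']; rewrite !inE /h => h1 h2 //.
    + have l : t' < NN by lia.
      by move=> e; move: (nm a' t' ha' l); rewrite -e eqxx.
    + have l : t < NN by lia.
      by move=> e; move: (nm a' t ha' l); rewrite e eqxx.
    + by move=> e; congr S; apply: (vf_inj ha') e; lia.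
  move=> [|t] h1 h2; rewrite /h.
    by rewrite setUC col_spec // col_zig ?ineq2 //; lia.
  have l : t.+2 < NN by lia.
  exact: (alt_zig ha' l).
- apply: disjP => E /pedges_map [t /andP [t1 t2] ->] /pedges_map [t' /andP [_ t2'] e].
  move: e; rewrite /g1 /h.
  have l0 : t < NN by lia.
  rewrite l0; case: ifP => l1; case: t' t2' => [|t'] t2'.
  + move/(congr1 (fun E : {set 'I_m.+1} => ord_max \in E)); rewrite set21 !inE.
    by rewrite !(eq_sym ord_max) (negbTE (nm _ _ hv l0)) (negbTE (nm _ _ hv l1)).
  + have ht' : t'.+1 < NN by lia.
    by apply/eqP; apply: (zz_dis hv l1 ht').
  + have et : t = NN - 1 by lia.
    move/(congr1 (fun E : {set 'I_m.+1} => vf vv t \in E)); rewrite set21 !inE et (negbTE (nm _ _ hv _)) ?(negbTE spn) //; lia.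
  + have ht' : t'.+1 < NN by lia.
    move/(congr1 (fun E : {set 'I_m.+1} => ord_max \in E)); rewrite set22 !inE.
    rewrite !(eq_sym ord_max) (negbTE (nm _ _ ha' ht')) (negbTE (nm _ _ ha' (ltnW ht'))) //.
have V2 : forall z, z \in (sg h 0 NN).1.
  move=> z; rewrite sg_mem; apply/mapP.
  case: (eqVneq z ord_max) => [->|zm]; first by exists 0.
  have : nat_of_ord z \in map (zig NN a') (iota 0 NN) by rewrite (zig_mem NN4 NNev _ ha') eN -ltm_nmax.
  case/mapP => t; rewrite mem_iota /= => ht ez; exists t.+1; first by rewrite in_cons mem_iota /=; lia.
  by rewrite /h /vf -ez inord_val.
apply/setP => z; rewrite in_setI V2 andbT sg_mem in_setC1.
have h0 : 0 < NN by lia.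
have ev : v = vf vv 0 by apply: val_inj; rewrite /= vf_val // (zig0 NN4 NNev hv).
have e1 : (NN - 1).+1 = NN by lia.
rewrite e1; apply/mapP/idP.
  case=> t; rewrite mem_iota => /andP [t1 t2] ->; rewrite /g1; case: ifP => l.
    by rewrite ev; apply/eqP => /(vf_inj hv l h0) => e; move: t1; rewrite e.
  by rewrite eq_sym.
move=> zv; case: (eqVneq z ord_max) => [->|zm].
  by exists NN; [rewrite mem_iota; lia | rewrite /g1 ltnn].
have : nat_of_ord z \in map (zig NN vv) (iota 1 NN.-1).
  rewrite (zig_mem1 NN4 NNev _ hv) eN -ltm_nmax zm /=.
  by apply: contra zv => /eqP e; apply/eqP; apply: val_inj.
case/mapP => t; rewrite mem_iota => /andP [t1 t2] ez.
have l : t < NN by lia.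
exists t; first by rewrite mem_iota; lia.
by rewrite /g1 l /vf -ez inord_val.
Qed.
End Main.

Lemma upper (m : nat) : 3 <= m -> exists c : coloring 'I_m.+1 2, kl_proper (@Kadj m.+1) (m.+1 - 1) 2 c.
Proof.
move=> m3; exists (@col m) => S cS.
have : #|~: S| == 1 by rewrite cardsCs setCK card_ord cS subn1 /= subSnn.
case/cards1P => v ev.
have -> : S = [set~ v] by rewrite -ev setCK.
have [T1 [T2 [h1 h2 h3 h4]]] : exists T1 T2 : subgraph 'I_m.+1,
   [/\ is_tree (fun a b : 'I_m.+1 => a != b) T1 /\ is_proper_tree (fun a b : 'I_m.+1 => a != b) (@col m) T1,
       is_tree (fun a b : 'I_m.+1 => a != b) T2 /\ is_proper_tree (fun a b : 'I_m.+1 => a != b) (@col m) T2,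
       T1.2 :&: T2.2 = set0 & T1.1 :&: T2.1 = [set~ v]].
  case: (boolP (odd m)) => om; first exact: caseA.
  case: (eqVneq v ord_max) => [->|vm]; first exact: caseB.
  exact: caseC.
exact: build h1 h2 h3 h4.
Qed.

Lemma lower (m : nat) (k : nat) (c : coloring 'I_m.+1 k) : 3 <= m ->
  kl_proper (@Kadj m.+1) (m.+1 - 1) 2 c -> 2 <= k.
Proof.
move=> m3 hc.
case: k c hc => [|[|k]] c hc //; first by case: (c set0).
exfalso.
have cS : #|[set~ (ord0 : 'I_m.+1)]| = m.+1 - 1 by rewrite cardsC1 card_ord subn1.
case: (hc _ cS) => Ts [/(_ ord0) [[tr sub] [_ pr]] _].
case: (Ts ord0) tr sub pr => V F /= [_ _ conn _] sub pr.
have pr' : forall E1 E2, E1 \in F -> E2 \in F -> E1 :&: E2 != set0 -> E1 = E2.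
  move=> E1 E2 e1 e2 ne; apply/eqP; apply: contraT => n12.
  by move: (pr _ _ e1 e2 n12 ne); rewrite (ord1 (c E1)) (ord1 (c E2)) eqxx.
pose x : 'I_m.+1 := inord 1.
pose y : 'I_m.+1 := inord 2.
pose z : 'I_m.+1 := inord 3.
have vx : nat_of_ord x = 1 by rewrite /x inordK //; lia.
have vy : nat_of_ord y = 2 by rewrite /y inordK //; lia.
have vz : nat_of_ord z = 3 by rewrite /z inordK //; lia.
have inV : forall w : 'I_m.+1, nat_of_ord w != 0 -> w \in V.
  move=> w hw; apply: (subsetP sub); rewrite in_setC1; apply: contra hw => /eqP ->; by [].
set A := [pred w | (w == x) || ([set x; w] \in F)].
have cl : forall u w, [set u; w] \in F -> u \in A -> w \in A.
  move=> u w huw; rewrite /A !inE => /orP [/eqP eu|hu]; first by rewrite -eu huw orbT.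
  have : [set x; u] :&: [set u; w] != set0 by apply/set0Pn; exists u; rewrite !inE !eqxx !orbT.
  move/(pr' _ _ hu huw) => e2.
  have : w \in [set x; u] by rewrite e2 set22.
  case/set2P => ->; first by rewrite eqxx.
  by rewrite hu orbT.
have toA : forall w, nat_of_ord w != 0 -> [set x; w] \in F \/ w = x.
  have hxV : x \in V by apply: inV; rewrite vx.
  move=> w hw; have := closedP cl (conn x w hxV (inV w hw)).
  rewrite /A !inE eqxx => /(_ isT) /orP [/eqP ->|]; [by right | by left].
have hy : [set x; y] \in F.
  case: (toA y _) => //; first by rewrite vy.
  by move/(congr1 (@nat_of_ord _)); rewrite vx vy.
have hz : [set x; z] \in F.
  case: (toA z _) => //; first by rewrite vz.
  by move/(congr1 (@nat_of_ord _)); rewrite vx vz.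
have : [set x; y] :&: [set x; z] != set0 by apply/set0Pn; exists x; rewrite !inE !eqxx.
move/(pr' _ _ hy hz) => e.
have : z \in [set x; y] by rewrite e set22.
by case/set2P => /(congr1 (@nat_of_ord _)); rewrite ?vx ?vy vz.
Qed.

Theorem theorem2p5 (n : nat) : 4 <= n -> px_is (@Kadj n) (n - 1) 2 2.
Proof.
case: n => [|m] // h4; have m3 : 3 <= m by [].
split; first exact: upper.
move=> k c hc; exact: lower m3 hc.
Qed.
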